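(* There is an absolute constant $C>0$ such that for all $\varepsilon\in(0,1]$, $\gamma\in(0,1]$ and $n\ge C/(\gamma^2\varepsilon^2)$ there exists a symmetric private-coin $\varepsilon$-LDP protocol with $n$ users, each holding an i.i.d. sample from an unknown $p\in\Delta(\{0,1\}\times\{0,1\})$, whose curator outputs ``independent'' with probability at least $2/3$ if $p$ is a product distribution, and ``not independent'' with probability at least $2/3$ if $p$ is $\gamma$-far from every product distribution.
   Context: $d_{TV}(p,q)=\frac12\|p-q\|_1$. $p$ is a product distribution if $p(x_1,x_2)=p_1(x_1)p_2(x_2)$ for some distributions $p_1,p_2$ on $\{0,1\}$; $p$ is $\gamma$-far from product if $d_{TV}(p,q)>\gamma$ for every product $q$. Private-coin symmetric protocol: each user sends $Z_j\sim W(\cdot\mid X_j)$ for a single channel $W$ into a finite set, independently across users, and the curator outputs a possibly randomized function of $(Z_1,\dots,Z_n)$; $\varepsilon$-LDP means $W(z\mid x)\le e^\varepsilon W(z\mid x')$ for all $z,x,x'$. *)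

(* Defs.v *)
From Stdlib Require Import Reals List.
Open Scope R_scope.

Fixpoint sumR (m : nat) (g : nat -> R) : R :=
  match m with
  | O => 0
  | S k => sumR k g + g k
  end.

(* Sum over the four points of {0,1} x {0,1} (bool encodes {0,1}). *)
Definition sum4 (g : bool -> bool -> R) : R :=
  g false false + g false true + g true false + g true true.

Definition is_dist2 (p : bool -> bool -> R) : Prop :=
  (forall a b, 0 <= p a b) /\ sum4 p = 1.

Definition is_dist1 (p : bool -> R) : Prop :=
  (forall a, 0 <= p a) /\ p false + p true = 1.

Definition dTV (p q : bool -> bool -> R) : R :=
  / 2 * sum4 (fun a b => Rabs (p a b - q a b)).

Definition is_product (p : bool -> bool -> R) : Prop :=
  exists p1 p2 : bool -> R, is_dist1 p1 /\ is_dist1 p2 /\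
    forall a b, p a b = p1 a * p2 b.

Definition gamma_far (gam : R) (p : bool -> bool -> R) : Prop :=
  forall q, is_dist2 q -> is_product q -> dTV p q > gam.

(* A channel W(z | x) into the finite message set {0,...,m-1}:
   W z a b = W(z | (a,b)). *)
Definition is_channel (m : nat) (W : nat -> bool -> bool -> R) : Prop :=
  (forall z a b, 0 <= W z a b) /\
  (forall a b, sumR m (fun z => W z a b) = 1).

Definition is_LDP (eps : R) (m : nat) (W : nat -> bool -> bool -> R) : Prop :=
  forall z a b a' b', (z < m)%nat -> W z a b <= exp eps * W z a' b'.

Definition msg_law (W : nat -> bool -> bool -> R) (p : bool -> bool -> R)
  (z : nat) : R := sum4 (fun a b => p a b * W z a b).

(* E[ f(Z_1,...,Z_n) ] for Z_1..Z_n i.i.d. with law q on {0..m-1}. *)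
Fixpoint expect_iid (n m : nat) (q : nat -> R) (f : list nat -> R) : R :=
  match n with
  | O => f nil
  | S k => sumR m (fun z => q z * expect_iid k m q (fun l => f (z :: l)))
  end.

(* Probability that the curator, whose (randomized) decision outputs
   "independent" with probability f(Z_1..Z_n), outputs "independent". *)
Definition prob_indep (n m : nat) (W : nat -> bool -> bool -> R)
  (f : list nat -> R) (p : bool -> bool -> R) : R :=
  expect_iid n m (msg_law W p) f.

(* Main.v *)
Require Import Defs.
From Stdlib Require Import Reals List Lra Lia Psatz Rpower.
Open Scope R_scope.

Lemma sumR_ext m g h : (forall z, g z = h z) -> sumR m g = sumR m h.
Proof. intro H; induction m; simpl; [reflexivity| rewrite IHm, H; reflexivity]. Qed.
Lemma sumR_plus m g h : sumR m (fun z => g z + h z) = sumR m g + sumR m h.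
Proof. induction m; simpl; [ring| rewrite IHm; ring]. Qed.
Lemma sumR_scal m c g : sumR m (fun z => c * g z) = c * sumR m g.
Proof. induction m; simpl; [ring| rewrite IHm; ring]. Qed.
Lemma sumR_le m g h : (forall z, g z <= h z) -> sumR m g <= sumR m h.
Proof. intro H; induction m; simpl; [lra| specialize (H m); lra]. Qed.

Lemma E_ext n m q f g : (forall l, f l = g l) -> expect_iid n m q f = expect_iid n m q g.
Proof.
  revert f g; induction n; intros f g H; simpl; [apply H|].
  apply sumR_ext; intro z; f_equal; apply IHn; intro; apply H.
Qed.
Lemma E_plus n m q f g :
  expect_iid n m q (fun l => f l + g l) = expect_iid n m q f + expect_iid n m q g.
Proof.
  revert f g; induction n; intros f g; simpl; [reflexivity|].
  rewrite <- sumR_plus; apply sumR_ext; intro z.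
  rewrite (IHn (fun l => f (z::l)) (fun l => g (z::l))); ring.
Qed.
Lemma E_scal n m q c f :
  expect_iid n m q (fun l => c * f l) = c * expect_iid n m q f.
Proof.
  revert f; induction n; intros f; simpl; [reflexivity|].
  rewrite <- sumR_scal; apply sumR_ext; intro z.
  rewrite (IHn (fun l => f (z::l))); ring.
Qed.
Lemma E_const n m q c : sumR m q = 1 -> expect_iid n m q (fun _ => c) = c.
Proof.
  intro Hs; induction n; simpl; [reflexivity|].
  rewrite IHn. rewrite (sumR_ext _ _ (fun z => c * q z)) by (intro; ring).
  rewrite sumR_scal. change (sumR m (fun z => q z)) with (sumR m q). rewrite Hs; ring.
Qed.
Lemma E_mono n m q f g : (forall z, 0 <= q z) -> (forall l, f l <= g l) ->
  expect_iid n m q f <= expect_iid n m q g.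
Proof.
  intros Hq; revert f g; induction n; intros f g H; simpl; [apply H|].
  apply sumR_le; intro z; apply Rmult_le_compat_l; [apply Hq|].
  apply IHn; intro; apply H.
Qed.
Lemma E_prod m q k j g h :
  expect_iid (k + j) m q (fun l => g (firstn k l) * h (skipn k l)) =
  expect_iid k m q g * expect_iid j m q h.
Proof.
  revert g; induction k; intros g; simpl.
  - exact (E_scal j m q (g nil) h).
  - rewrite (sumR_ext _ _ (fun z => expect_iid j m q h * (q z * expect_iid k m q (fun l => g (z::l))))).
    + rewrite sumR_scal; ring.
    + intro z; rewrite (IHk (fun l => g (z::l))); ring.
Qed.
Lemma E_first m q k j g : sumR m q = 1 ->
  expect_iid (k + j) m q (fun l => g (firstn k l)) = expect_iid k m q g.
Proof.
  intro Hs.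
  transitivity (expect_iid (k + j) m q (fun l => g (firstn k l) * (fun _ => 1) (skipn k l))).
  { apply E_ext; intro; simpl; ring. }
  rewrite (E_prod m q k j g (fun _ => 1)), E_const by exact Hs; ring.
Qed.
Lemma E_skip m q k j h : sumR m q = 1 ->
  expect_iid (k + j) m q (fun l => h (skipn k l)) = expect_iid j m q h.
Proof.
  intro Hs.
  transitivity (expect_iid (k + j) m q (fun l => (fun _ => 1) (firstn k l) * h (skipn k l))).
  { apply E_ext; intro; simpl; ring. }
  rewrite (E_prod m q k j (fun _ => 1) h), E_const by exact Hs; ring.
Qed.

Fixpoint Ssum (k : nat) (phi : nat -> R) (l : list nat) : R :=
  match k, l with
  | O, _ => 0
  | S k', nil => 0
  | S k', z :: l' => phi z + Ssum k' phi l'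
  end.

Lemma Ssum_firstn k phi l : Ssum k phi (firstn k l) = Ssum k phi l.
Proof. revert l; induction k; intros [|z l]; simpl; auto. rewrite IHk; auto. Qed.

Definition mu m q (phi : nat -> R) := sumR m (fun z => q z * phi z).

Lemma E_Ssum m q phi k : sumR m q = 1 ->
  expect_iid k m q (Ssum k phi) = INR k * mu m q phi.
Proof.
  intro Hs; induction k; simpl; [ring|].
  rewrite (sumR_ext _ _ (fun z => q z * phi z + (INR k * mu m q phi) * q z)).
  - rewrite sumR_plus, sumR_scal. change (sumR m (fun z => q z)) with (sumR m q).
    rewrite Hs. unfold mu. destruct k; simpl; ring.
  - intro z. rewrite E_plus, E_const by exact Hs. rewrite IHk. ring.
Qed.

Lemma E_Ssum2 m q phi k : sumR m q = 1 ->
  expect_iid k m q (fun l => (Ssum k phi l)^2) =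
  INR k * mu m q (fun z => phi z ^ 2) + (INR k ^ 2 - INR k) * (mu m q phi)^2.
Proof.
  intro Hs; induction k; simpl; [ring|].
  rewrite (sumR_ext _ _ (fun z => q z * (phi z ^ 2) + (2 * INR k * mu m q phi) * (q z * phi z)
     + (INR k * mu m q (fun z => phi z ^ 2) + (INR k ^ 2 - INR k) * (mu m q phi)^2) * q z)).
  - rewrite !sumR_plus, !sumR_scal. change (sumR m (fun z => q z)) with (sumR m q).
    rewrite Hs. unfold mu. destruct k; simpl; ring.
  - intro z.
    rewrite (E_ext _ _ _ _ (fun l => phi z ^2 + ((2 * phi z) * Ssum k phi l + (Ssum k phi l)^2)))
      by (intro; ring).
    rewrite E_plus, E_const, E_plus, E_scal, IHk, E_Ssum by exact Hs. ring.
Qed.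

Definition avg k phi l := Ssum k phi l / INR k.

Lemma E_var m q phi k : sumR m q = 1 -> (0 < k)%nat ->
  expect_iid k m q (fun l => (avg k phi l - mu m q phi)^2) <=
  mu m q (fun z => phi z ^ 2) / INR k.
Proof.
  intros Hs Hk. assert (HK : 0 < INR k) by (apply lt_0_INR; lia).
  set (M := mu m q phi). set (V := mu m q (fun z => phi z ^ 2)).
  rewrite (E_ext _ _ _ _ (fun l => (/ INR k ^ 2) * (Ssum k phi l)^2 +
      ((- 2 * M / INR k) * Ssum k phi l + M^2))) by (intro; unfold avg; field; lra).
  rewrite E_plus, E_scal, E_plus, E_scal, E_const, E_Ssum2, E_Ssum by exact Hs.
  fold M V.
  assert (E : / INR k ^ 2 * (INR k * V + (INR k ^ 2 - INR k) * M ^ 2) +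
     (-2 * M / INR k * (INR k * M) + M ^ 2) = V / INR k - M^2 / INR k) by (field; lra).
  rewrite E. assert (0 <= M^2 / INR k) by (unfold Rdiv; apply Rmult_le_pos; [nra| left; apply Rinv_0_lt_compat; lra]). lra.
Qed.

Lemma E_sq m q phi k : sumR m q = 1 -> (0 < k)%nat ->
  expect_iid k m q (fun l => (avg k phi l)^2) <=
  (mu m q phi)^2 + mu m q (fun z => phi z ^ 2) / INR k.
Proof.
  intros Hs Hk. set (M := mu m q phi).
  rewrite (E_ext _ _ _ _ (fun l => (avg k phi l - M)^2 + ((2*M) * avg k phi l + (- M^2))))
    by (intro; ring).
  rewrite E_plus, E_plus, E_scal, E_const by exact Hs.
  rewrite (E_ext k m q (avg k phi) (fun l => / INR k * Ssum k phi l)) by (intro; unfold avg, Rdiv; ring).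
  rewrite E_scal. rewrite (E_Ssum m q phi k Hs).
  assert (HK : 0 < INR k) by (apply lt_0_INR; lia).
  pose proof (E_var m q phi k Hs Hk). fold M in H.
  fold M. replace (2 * M * (/ INR k * (INR k * M)) + - M ^ 2) with (M^2) by (field; lra). lra.
Qed.

Definition hi e := e / (e + 1) / 3.
Definition lo e := 1 / (e + 1) / 3.
Definition Wc (e : R) (z : nat) (a b : bool) : R :=
  match z with
  | 0%nat => if a then lo e else hi e
  | 1%nat => if a then hi e else lo e
  | 2%nat => if b then lo e else hi e
  | 3%nat => if b then hi e else lo e
  | 4%nat => if xorb a b then lo e else hi e
  | 5%nat => if xorb a b then hi e else lo e
  | _ => 0
  end.
Definition kap e := 3 * (e + 1) / (e - 1).
Definition phiX e (z : nat) : R := match z with 0%nat => kap e | 1%nat => - kap e | _ => 0 end.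
Definition phiY e (z : nat) : R := match z with 2%nat => kap e | 3%nat => - kap e | _ => 0 end.
Definition phiZ e (z : nat) : R := match z with 4%nat => kap e | 5%nat => - kap e | _ => 0 end.

Definition mX (p : bool -> bool -> R) := p false false + p false true - p true false - p true true.
Definition mY (p : bool -> bool -> R) := p false false - p false true + p true false - p true true.
Definition mZ (p : bool -> bool -> R) := p false false - p false true - p true false + p true true.

Lemma Wc_nonneg e z a b : 1 < e -> 0 <= Wc e z a b.
Proof.
  intro He. assert (0 <= hi e /\ 0 <= lo e) as [H1 H2].
  { unfold hi, lo; split; unfold Rdiv; repeat apply Rmult_le_pos; try lra;
    left; apply Rinv_0_lt_compat; lra. }
  destruct z as [|[|[|[|[|[|z]]]]]]; simpl; try lra; destruct a, b; simpl; lra.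
Qed.

Lemma Wc_channel e : 1 < e -> is_channel 6 (Wc e).
Proof.
  intro He; split; [intros; apply Wc_nonneg; auto|].
  intros a b; destruct a, b; simpl; unfold hi, lo; field; lra.
Qed.

Lemma Wc_LDP eps : 0 < eps -> is_LDP eps 6 (Wc (exp eps)).
Proof.
  intro Heps. unfold is_LDP. assert (He : 1 < exp eps) by (pose proof (exp_ineq1 eps); lra).
  set (e := exp eps) in *. clearbody e.
  assert (Hh : hi e <= e * lo e) by (unfold hi, lo; right; field; lra).
  assert (Hl : lo e <= e * hi e).
  { unfold hi, lo. apply Rmult_le_reg_r with (3 * (e+1)); [lra|].
    replace (1 / (e + 1) / 3 * (3 * (e + 1))) with 1 by (field; lra).
    replace (e * (e / (e + 1) / 3) * (3 * (e + 1))) with (e * e) by (field; lra). nra. }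
  assert (0 <= hi e /\ 0 <= lo e) as [H1 H2].
  { unfold hi, lo; split; unfold Rdiv; repeat apply Rmult_le_pos; try lra;
    left; apply Rinv_0_lt_compat; lra. }
  assert (Hhh : hi e <= e * hi e) by nra.
  assert (Hll : lo e <= e * lo e) by nra.
  intros z a b a' b' Hz.
  destruct z as [|[|[|[|[|[|z]]]]]]; try lia; cbn -[hi lo];
  destruct a, b, a', b'; cbn -[hi lo]; lra.
Qed.


Lemma q_nonneg e p : 1 < e -> is_dist2 p -> forall z, 0 <= msg_law (Wc e) p z.
Proof.
  intros He [Hp _] z. unfold msg_law, sum4.
  pose proof (Wc_nonneg e z) as HW.
  repeat apply Rplus_le_le_0_compat; apply Rmult_le_pos; auto.
Qed.

Lemma q_sum e p : 1 < e -> is_dist2 p -> sumR 6 (msg_law (Wc e) p) = 1.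
Proof.
  intros He [_ Hs]. unfold sum4 in Hs. unfold msg_law, sum4; simpl. unfold hi, lo.
  replace (p true true) with (1 - p false false - p false true - p true false) by lra.
  field; lra.
Qed.

Lemma muX e p : 1 < e -> mu 6 (msg_law (Wc e) p) (phiX e) = mX p.
Proof. intros He. unfold mu, msg_law, sum4, mX, kap; simpl. unfold hi, lo, kap. field; lra. Qed.
Lemma muY e p : 1 < e -> mu 6 (msg_law (Wc e) p) (phiY e) = mY p.
Proof. intros He. unfold mu, msg_law, sum4, mY, kap; simpl. unfold hi, lo, kap. field; lra. Qed.
Lemma muZ e p : 1 < e -> mu 6 (msg_law (Wc e) p) (phiZ e) = mZ p.
Proof. intros He. unfold mu, msg_law, sum4, mZ, kap; simpl. unfold hi, lo, kap. field; lra. Qed.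

Lemma nuX e p : 1 < e -> is_dist2 p -> mu 6 (msg_law (Wc e) p) (fun z => phiX e z ^ 2) = kap e ^ 2 / 3.
Proof. intros He [_ Hs]; unfold sum4 in Hs; unfold mu, msg_law, sum4; simpl; unfold hi, lo, kap;
  replace (p true true) with (1 - p false false - p false true - p true false) by lra;
  field; lra. Qed.
Lemma nuY e p : 1 < e -> is_dist2 p -> mu 6 (msg_law (Wc e) p) (fun z => phiY e z ^ 2) = kap e ^ 2 / 3.
Proof. intros He [_ Hs]; unfold sum4 in Hs; unfold mu, msg_law, sum4; simpl; unfold hi, lo, kap;
  replace (p true true) with (1 - p false false - p false true - p true false) by lra;
  field; lra. Qed.
Lemma nuZ e p : 1 < e -> is_dist2 p -> mu 6 (msg_law (Wc e) p) (fun z => phiZ e z ^ 2) = kap e ^ 2 / 3.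
Proof. intros He [_ Hs]; unfold sum4 in Hs; unfold mu, msg_law, sum4; simpl; unfold hi, lo, kap;
  replace (p true true) with (1 - p false false - p false true - p true false) by lra;
  field; lra. Qed.

Lemma m_bound p : is_dist2 p -> mX p ^ 2 <= 1 /\ mY p ^ 2 <= 1.
Proof.
  intros [Hp Hs]; unfold sum4 in Hs; unfold mX, mY.
  pose proof (Hp false false); pose proof (Hp false true); pose proof (Hp true false); pose proof (Hp true true).
  split; nra.
Qed.

Lemma t_D p : is_dist2 p ->
  mX p * mY p - mZ p = - 4 * (p false false * p true true - p false true * p true false).
Proof.
  intros [_ Hs]; unfold sum4 in Hs; unfold mX, mY, mZ.
  replace (p true true) with (1 - p false false - p false true - p true false) by lra. ring.
Qed.

Lemma prod_t p : is_dist2 p -> is_product p -> mX p * mY p - mZ p = 0.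
Proof.
  intros _ (p1 & p2 & [_ H1] & [_ H2] & Hp). unfold mX, mY, mZ. rewrite !Hp.
  replace (p1 true) with (1 - p1 false) by lra. replace (p2 true) with (1 - p2 false) by lra. ring.
Qed.

Lemma far_t gam p : is_dist2 p -> gamma_far gam p -> 2 * gam < Rabs (mX p * mY p - mZ p).
Proof.
  intros Hd Hf. rewrite (t_D p Hd).
  destruct Hd as [Hp Hs]. unfold sum4 in Hs.
  pose proof (Hp false false); pose proof (Hp false true); pose proof (Hp true false); pose proof (Hp true true).
  set (p1 := fun a => p a false + p a true). set (p2 := fun b => p false b + p true b).
  assert (Hd1 : is_dist1 p1) by (split; [intro a; unfold p1; pose proof (Hp a false); pose proof (Hp a true); lra| unfold p1; lra]).
  assert (Hd2 : is_dist1 p2) by (split; [intro a; unfold p2; pose proof (Hp false a); pose proof (Hp true a); lra| unfold p2; lra]).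
  specialize (Hf (fun a b => p1 a * p2 b)).
  assert (Hq : is_dist2 (fun a b => p1 a * p2 b)).
  { split. intros a b; apply Rmult_le_pos; [apply Hd1|apply Hd2].
    unfold sum4, p1, p2. replace (p true true) with (1 - p false false - p false true - p true false) by lra. ring. }
  assert (Hpr : is_product (fun a b => p1 a * p2 b)) by (exists p1, p2; auto).
  specialize (Hf Hq Hpr). unfold dTV, sum4, p1, p2 in Hf.
  set (D := p false false * p true true - p false true * p true false) in *.
  assert (E1 : p false false - (p false false + p false true) * (p false false + p true false) = D)
    by (unfold D; replace (p true true) with (1 - p false false - p false true - p true false) by lra; ring).
  assert (E2 : p false true - (p false false + p false true) * (p false true + p true true) = - D)
    by (unfold D; replace (p true true) with (1 - p false false - p false true - p true false) by lra; ring).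
  assert (E3 : p true false - (p true false + p true true) * (p false false + p true false) = - D)
    by (unfold D; replace (p true true) with (1 - p false false - p false true - p true false) by lra; ring).
  assert (E4 : p true true - (p true false + p true true) * (p false true + p true true) = D)
    by (unfold D; replace (p true true) with (1 - p false false - p false true - p true false) by lra; ring).
  rewrite E1, E2, E3, E4, Rabs_Ropp in Hf.
  rewrite Rabs_mult. rewrite (Rabs_left (-4)) by lra.
  lra.
Qed.

Lemma E_prod' m q k j g h F : (forall l, F l = g (firstn k l) * h (skipn k l)) ->
  expect_iid (k + j) m q F = expect_iid k m q g * expect_iid j m q h.
Proof. intro H. rewrite (E_ext _ _ _ _ _ H). apply E_prod. Qed.
Lemma E_first' m q k j g F : sumR m q = 1 -> (forall l, F l = g (firstn k l)) ->
  expect_iid (k + j) m q F = expect_iid k m q g.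
Proof. intros Hs H. rewrite (E_ext _ _ _ _ _ H). apply E_first; auto. Qed.
Lemma E_skip' m q k j h F : sumR m q = 1 -> (forall l, F l = h (skipn k l)) ->
  expect_iid (k + j) m q F = expect_iid j m q h.
Proof. intros Hs H. rewrite (E_ext _ _ _ _ _ H). apply E_skip; auto. Qed.

Lemma E_first0 m q k g F : sumR m q = 1 -> (forall l, F l = g (firstn k l)) ->
  expect_iid k m q F = expect_iid k m q g.
Proof. intros Hs H. pose proof (E_first' m q k 0 g F Hs H) as E. rewrite Nat.add_0_r in E. exact E. Qed.

Lemma avg_firstn k phi l : avg k phi (firstn k l) = avg k phi l.
Proof. unfold avg; rewrite Ssum_firstn; reflexivity. Qed.

Definition T e k l := avg k (phiX e) l * avg k (phiY e) (skipn k l)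
  - avg k (phiZ e) (skipn k (skipn k l)).

Lemma sq_bound u v w a : a ^ 2 <= 1 -> (u + a * v - w) ^ 2 <= 4 * u ^ 2 + (4 * v ^ 2 + 2 * w ^ 2).
Proof.
  intro Ha.
  assert ((u + a*v - w)^2 <= 2 * (u + a*v)^2 + 2 * w^2) by (pose proof (pow2_ge_0 (u + a*v + w)); nra).
  assert ((u + a*v)^2 <= 2 * u^2 + 2 * (a*v)^2) by (pose proof (pow2_ge_0 (u - a*v)); nra).
  assert ((a*v)^2 <= v^2) by (rewrite Rpow_mult_distr; nra).
  lra.
Qed.

Lemma core e p k r : 1 < e -> is_dist2 p -> (0 < k)%nat -> kap e ^ 2 / 3 / INR k <= 1 ->
  expect_iid (k + (k + (k + r))) 6 (msg_law (Wc e) p)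
    (fun l => (T e k l - (mX p * mY p - mZ p)) ^ 2) <= 14 * (kap e ^ 2 / 3 / INR k).
Proof.
  intros He Hd Hk Hdel.
  set (q := msg_law (Wc e) p).
  set (d := kap e ^ 2 / 3 / INR k) in *.
  assert (Hq : forall z, 0 <= q z) by (apply q_nonneg; auto).
  assert (Hs : sumR 6 q = 1) by (apply q_sum; auto).
  destruct (m_bound p Hd) as [HmX HmY].
  assert (Hd0 : 0 <= d).
  { assert (HK : 0 < INR k) by (apply lt_0_INR; lia). pose proof (pow2_ge_0 (kap e)).
    unfold d, Rdiv. apply Rmult_le_pos; [apply Rmult_le_pos; lra|left; apply Rinv_0_lt_compat; lra]. }
  set (a := avg k (phiX e)). set (b := avg k (phiY e)). set (c := avg k (phiZ e)).
  assert (VX : expect_iid k 6 q (fun l => (a l - mX p)^2) <= d).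
  { pose proof (E_var 6 q (phiX e) k Hs Hk). unfold q in H at 2 3. rewrite muX, nuX in H by auto. exact H. }
  assert (VY : expect_iid k 6 q (fun l => (b l - mY p)^2) <= d).
  { pose proof (E_var 6 q (phiY e) k Hs Hk). unfold q in H at 2 3. rewrite muY, nuY in H by auto. exact H. }
  assert (VZ : expect_iid k 6 q (fun l => (c l - mZ p)^2) <= d).
  { pose proof (E_var 6 q (phiZ e) k Hs Hk). unfold q in H at 2 3. rewrite muZ, nuZ in H by auto. exact H. }
  assert (SY : expect_iid k 6 q (fun l => (b l)^2) <= 1 + d).
  { pose proof (E_sq 6 q (phiY e) k Hs Hk). unfold q in H at 2 3. rewrite muY, nuY in H by auto. fold d in H.
    unfold b. lra. }
  assert (P1 : 0 <= expect_iid k 6 q (fun l => (a l - mX p)^2)).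
  { rewrite <- (E_const k 6 q 0 Hs). apply E_mono; auto. intro; cbv beta; apply pow2_ge_0. }
  apply Rle_trans with (expect_iid (k + (k + (k + r))) 6 q (fun l =>
     4 * ((a l - mX p) * b (skipn k l)) ^ 2 + (4 * (b (skipn k l) - mY p) ^ 2
      + 2 * (c (skipn k (skipn k l)) - mZ p) ^ 2))).
  { apply E_mono; auto. intro l. unfold T. fold a b c.
    replace (a l * b (skipn k l) - c (skipn k (skipn k l)) - (mX p * mY p - mZ p)) with
      ((a l - mX p) * b (skipn k l) + mX p * (b (skipn k l) - mY p) - (c (skipn k (skipn k l)) - mZ p)) by ring.
    apply sq_bound; exact HmX. }
  rewrite E_plus, E_scal, E_plus, E_scal, E_scal.
  rewrite (E_prod' 6 q k (k + (k + r)) (fun l => (a l - mX p)^2) (fun l => (b l)^2)).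
  2:{ intro l. unfold a; rewrite avg_firstn. rewrite Rpow_mult_distr. reflexivity. }
  rewrite (E_first' 6 q k (k + r) (fun l => (b l)^2) (fun l => (b l)^2)); auto.
  2:{ intro l. unfold b; rewrite avg_firstn. reflexivity. }
  rewrite (E_skip' 6 q k (k + (k + r)) (fun l => (b l - mY p)^2)); auto.
  rewrite (E_first' 6 q k (k + r) (fun l => (b l - mY p)^2) (fun l => (b l - mY p)^2)); auto.
  2:{ intro l. unfold b; rewrite avg_firstn. reflexivity. }
  rewrite (E_skip' 6 q k (k + (k + r)) (fun l => (c (skipn k l) - mZ p)^2)); auto.
  rewrite (E_skip' 6 q k (k + r) (fun l => (c l - mZ p)^2)); auto.
  rewrite (E_first' 6 q k r (fun l => (c l - mZ p)^2) (fun l => (c l - mZ p)^2)); auto.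
  2:{ intro l. unfold c; rewrite avg_firstn. reflexivity. }
  assert (expect_iid k 6 q (fun l => (a l - mX p)^2) * expect_iid k 6 q (fun l => (b l)^2) <= d * (1 + d)).
  { apply Rmult_le_compat; auto. rewrite <- (E_const k 6 q 0 Hs). apply E_mono; auto. intro; cbv beta; apply pow2_ge_0. }
  nra.
Qed.

Lemma L1 g x : 0 < g -> g < Rabs x -> 1 <= / g ^ 2 * x ^ 2.
Proof.
  intros Hg Hx. rewrite <- (pow2_abs x).
  assert (Hi : / g ^ 2 * g ^ 2 = 1) by (field; lra).
  assert (0 < / g ^ 2) by (apply Rinv_0_lt_compat; nra).
  pose proof (Rabs_pos x).
  assert (g ^ 2 <= Rabs x ^ 2) by nra.
  assert (0 <= / g ^ 2 * (Rabs x ^ 2 - g ^ 2)) by (apply Rmult_le_pos; lra).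
  replace (/ g ^ 2 * Rabs x ^ 2) with (/ g ^ 2 * (Rabs x ^ 2 - g ^ 2) + / g ^ 2 * g ^ 2) by ring.
  lra.
Qed.

Lemma L2 g T0 t : 0 < g -> Rabs T0 <= g -> 2 * g < Rabs t -> 1 <= / g ^ 2 * (T0 - t) ^ 2.
Proof.
  intros Hg H1 H2. apply L1; auto.
  pose proof (Rabs_triang_inv t T0). rewrite <- Rabs_Ropp, Ropp_minus_distr. lra.
Qed.

Theorem corollary2p8 :
  exists C : R, 0 < C /\
  forall (eps gam : R) (n : nat),
    0 < eps <= 1 -> 0 < gam <= 1 ->
    INR n >= C / (gam ^ 2 * eps ^ 2) ->
    exists (m : nat) (W : nat -> bool -> bool -> R) (f : list nat -> R),
      is_channel m W /\ is_LDP eps m W /\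
      (forall zs, 0 <= f zs <= 1) /\
      forall p : bool -> bool -> R, is_dist2 p ->
        (is_product p -> prob_indep n m W f p >= 2 / 3) /\
        (gamma_far gam p -> 1 - prob_indep n m W f p >= 2 / 3).
Proof.
  exists 10000. split; [lra|]. intros eps gam n Heps Hgam Hn.
  assert (He1 : 1 + eps < exp eps) by (apply exp_ineq1; lra).
  assert (He3 : exp eps <= 3).
  { pose proof exp_le_3. destruct (Rle_lt_or_eq_dec eps 1 (proj2 Heps)) as [Hlt| ->]; [|lra].
    pose proof (exp_increasing eps 1 Hlt). lra. }
  pose proof (Wc_LDP eps (proj1 Heps)) as HLDP.
  set (e := exp eps) in *. clearbody e.
  assert (He : 1 < e) by lra.
  pose proof (Nat.div_mod_eq n 3). pose proof (Nat.mod_upper_bound n 3 ltac:(lia)).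
  set (k := (n / 3)%nat) in *. set (r := (n mod 3)%nat) in *. clearbody k r.
  assert (Hn3 : n = (k + (k + (k + r)))%nat) by lia.
  assert (HnR : INR n = 3 * INR k + INR r).
  { rewrite Hn3, !plus_INR. ring. }
  assert (Hr2 : INR r <= 2) by (replace 2 with (INR 2) by (simpl; ring); apply le_INR; lia).
  assert (Hr0 : 0 <= INR r) by apply pos_INR.
  set (X := gam ^ 2 * eps ^ 2).
  assert (HX0 : 0 < X) by (unfold X; apply Rmult_lt_0_compat; apply pow_lt; lra).
  assert (HX1 : X <= 1) by (unfold X; assert (gam^2 <= 1) by nra; assert (eps^2 <= 1) by nra;
    assert (0 <= gam^2) by nra; assert (0 <= eps^2) by nra; nra).
  assert (HnX : INR n * X >= 10000).
  { apply Rge_le in Hn. apply Rle_ge. unfold Rdiv in Hn.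
    apply Rmult_le_compat_r with (r := X) in Hn; [|lra].
    rewrite Rmult_assoc, Rinv_l in Hn by lra. lra. }
  assert (HkX : INR k * X >= 3332) by nra.
  assert (HK : 0 < INR k) by (pose proof (pos_INR k); nra).
  assert (Hk : (0 < k)%nat) by (destruct k; [simpl in HK; lra| lia]).
  assert (Hkap : kap e * eps <= 12).
  { unfold kap. assert (E : 3 * (e + 1) / (e - 1) * eps = 3 * (e + 1) * (eps / (e - 1))) by (field; lra).
    rewrite E. assert (eps / (e - 1) <= 1).
    { apply Rmult_le_reg_r with (e - 1); [lra|]. unfold Rdiv. rewrite Rmult_assoc, Rinv_l by lra. lra. }
    assert (0 <= eps / (e - 1)) by (unfold Rdiv; apply Rmult_le_pos; [lra|left; apply Rinv_0_lt_compat; lra]).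
    nra. }
  assert (Hkap0 : 0 < kap e) by (unfold kap, Rdiv; apply Rmult_lt_0_compat; [lra| apply Rinv_0_lt_compat; lra]).
  set (d := kap e ^ 2 / 3 / INR k).
  assert (Hkk : 42 * kap e ^ 2 <= 3 * INR k * gam ^ 2).
  { assert (H1 : (kap e * eps) ^ 2 <= 144) by (assert (0 <= kap e * eps) by nra; nra).
    apply Rmult_le_reg_r with (eps ^ 2); [apply pow_lt; lra|].
    unfold X in HkX. rewrite Rpow_mult_distr in H1. nra. }
  assert (Hdg : d <= gam ^ 2 / 42).
  { unfold d. apply Rmult_le_reg_r with (42 * (3 * INR k)); [nra|].
    replace (kap e ^ 2 / 3 / INR k * (42 * (3 * INR k))) with (42 * kap e ^ 2) by (field; lra).
    replace (gam ^ 2 / 42 * (42 * (3 * INR k))) with (3 * INR k * gam ^ 2) by field. lra. }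
  assert (Hd1 : d <= 1) by (assert (gam^2 <= 1) by nra; lra).
  set (f := fun zs => if Rle_dec (Rabs (T e k zs)) gam then 1 else 0).
  exists 6%nat, (Wc e), f.
  split; [apply Wc_channel; auto|]. split; [exact HLDP|]. split.
  { intro zs; unfold f; destruct Rle_dec; lra. }
  intros p Hd.
  pose proof (core e p k r He Hd Hk Hd1) as Hc. fold d in Hc.
  set (t := mX p * mY p - mZ p) in *.
  set (q := msg_law (Wc e) p) in *.
  assert (Hq : forall z, 0 <= q z) by (apply q_nonneg; auto).
  assert (Hs : sumR 6 q = 1) by (apply q_sum; auto).
  assert (HV : / gam ^ 2 * expect_iid (k + (k + (k + r))) 6 q (fun l => (T e k l - t) ^ 2) <= 1 / 3).
  { assert (0 < gam ^ 2) by (apply pow_lt; lra).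
    assert (Hi : / gam ^ 2 * gam ^ 2 = 1) by (field; lra).
    assert (0 < / gam ^ 2) by (apply Rinv_0_lt_compat; lra). nra. }
  unfold prob_indep. fold q. rewrite Hn3.
  split.
  - intro Hpr. assert (Ht : t = 0) by (apply prod_t; auto).
    apply Rle_ge.
    apply Rle_trans with (expect_iid (k + (k + (k + r))) 6 q (fun l => 1 + (- / gam ^ 2) * (T e k l - t) ^ 2)).
    + rewrite E_plus, E_const, E_scal by exact Hs. lra.
    + apply E_mono; auto. intro l. unfold f. cbv beta. destruct Rle_dec as [H1|H1].
      * assert (0 <= / gam ^ 2 * (T e k l - t) ^ 2).
        { apply Rmult_le_pos; [left; apply Rinv_0_lt_compat; apply pow_lt; lra| apply pow2_ge_0]. }
        lra.
      * rewrite Ht, Rminus_0_r. pose proof (L1 gam (T e k l) (proj1 Hgam) ltac:(lra)). lra.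
  - intro Hfar. pose proof (far_t gam p Hd Hfar) as Ht. fold t in Ht.
    assert (expect_iid (k + (k + (k + r))) 6 q f <= 1 / 3); [|lra].
    apply Rle_trans with (expect_iid (k + (k + (k + r))) 6 q (fun l => / gam ^ 2 * (T e k l - t) ^ 2)).
    + apply E_mono; auto. intro l. unfold f. destruct Rle_dec as [H1|H1].
      * apply L2; lra.
      * apply Rmult_le_pos; [left; apply Rinv_0_lt_compat; apply pow_lt; lra| apply pow2_ge_0].
    + rewrite E_scal. exact HV.
Qed.
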